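(* Let $\mathfrak S$ be a commutative semiring with identity and let $\sigma_{\mathfrak S}$ be a set of ideals of $\mathfrak S$ containing all maximal ideals of $\mathfrak S$. Then the Iséki space $\sigma_{\mathfrak S}$ (i.e. $\sigma_{\mathfrak S}$ with the ideal topology) is quasi-compact.
   Context: A semiring $(\mathfrak S,+,0,\cdot,1)$ has $(\mathfrak S,+,0)$ a commutative monoid, $(\mathfrak S,\cdot,1)$ a monoid, $0r=r0=0$, and two-sided distributivity; all semirings are commutative. An ideal of $\mathfrak S$ is a nonempty proper subset closed under addition and under multiplication by arbitrary elements of $\mathfrak S$; a maximal ideal is an ideal not properly contained in any other ideal. For an ideal $\mathfrak a$ put $\mathfrak a^{\uparrow}=\{\mathfrak x\in\sigma_{\mathfrak S}\mid \mathfrak a\subseteq\mathfrak x\}$. The ideal topology on $\sigma_{\mathfrak S}$ is the topology for which the sets $\mathfrak a^{\uparrow}$, $\mathfrak a$ ranging over ideals of $\mathfrak S$, form a subbasis of closed sets. Quasi-compact means every open cover has a finite subcover (no Hausdorff assumption). *)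

(* Defs.v *)
From HB Require Import structures.
From mathcomp Require Import all_boot all_order all_algebra.
From mathcomp Require Import boolp classical_sets.
Set Implicit Arguments. Unset Strict Implicit. Unset Printing Implicit Defensive.
Import GRing.Theory.
Local Open Scope classical_set_scope.
Local Open Scope ring_scope.

Section IsekiDefs.
Variable R : comPzSemiRingType.

Definition is_ideal (I : set R) : Prop :=
  (exists x, I x) /\ (exists x, ~ I x) /\
  (forall x y, I x -> I y -> I (x + y)) /\
  (forall r x, I x -> I (r * x)).

Definition is_maximal_ideal (M : set R) : Prop :=
  is_ideal M /\ forall J, is_ideal J -> M `<=` J -> J = M.

Variable sigma : set (set R).

Definition up_set (a : set R) : set (set R) := [set x | sigma x /\ a `<=` x].

(* The ideal topology on sigma: the sets a^up (a an ideal) form a subbasis of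
   closed sets; equivalently the complements sigma \ a^up form a subbasis of
   open sets.  Basic opens are finite intersections of subbasic opens (the
   empty intersection being the whole space sigma); opens are unions of basic
   opens. *)
Definition basic_open (U : set (set R)) : Prop :=
  exists (n : nat) (a : 'I_n -> set R),
    (forall i, is_ideal (a i)) /\
    U = [set x | sigma x /\ forall i, ~ (up_set (a i) x)].

Definition ideal_open (U : set (set R)) : Prop :=
  exists F : set (set (set R)), F `<=` basic_open /\ U = \bigcup_(B in F) B.

Definition iseki_quasi_compact : Prop :=
  forall (I : Type) (U : I -> set (set R)),
    (forall i, ideal_open (U i)) ->
    sigma `<=` \bigcup_(i in setT) U i ->
    exists (n : nat) (f : 'I_n -> I), sigma `<=` \bigcup_(k in setT) U (f k).

End IsekiDefs.

(* Main.v *)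
Require Import Defs.
From HB Require Import structures.
From mathcomp Require Import all_boot all_order all_algebra.
From mathcomp Require Import boolp classical_sets.
From Stdlib Require List.
Local Open Scope classical_set_scope.

Section Helpers.
Import GRing.Theory.
Local Open Scope ring_scope.
Variable R : comPzSemiRingType.

Lemma one_notin {I : set R} : is_ideal I -> ~ I 1.
Proof.
move=> [_ [[y Iy] [_ Imul]]] I1; apply: Iy.
by rewrite -(mulr1 y); apply: Imul.
Qed.

Lemma ideal0 {I : set R} : is_ideal I -> I 0.
Proof.
move=> [[y Iy] [_ [_ Imul]]]; by rewrite -(mul0r y); apply: Imul.
Qed.

Lemma krull {I : set R} : is_ideal I -> exists M, is_maximal_ideal M /\ I `<=` M.
Proof.
move=> hI; have h1 := one_notin hI.
case: hI => [[x0 Ix0] [_ [Iadd Imul]]].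
pose P := [set J : set R | J = set0 \/ (I `<=` J /\ ~ J 1 /\
   (forall x y, J x -> J y -> J (x+y)) /\ (forall r x, J x -> J (r*x)))].
have [] := @Zorn_bigcup R P.
  move=> F FP Ftot.
  case: (pselect (exists X, F X /\ X <> set0)) => [[X0 [FX0 X0n]]|nF]; last first.
    left; apply/seteqP; split => // x [X FX Xx]; apply: nF; exists X; split=> // Xe.
    by rewrite Xe in Xx.
  have FXi : forall X x, F X -> X x -> (I `<=` X /\ ~ X 1 /\
      (forall x y, X x -> X y -> X (x+y)) /\ (forall r x, X x -> X (r*x))).
    move=> X x FX Xx; case: (FP X FX) => // Xe; by rewrite Xe in Xx.
  right; split.
    move=> x Ix; exists X0 => //; case: (FP X0 FX0) => // -[+ _]; exact.
  split.
    by move=> [X FX X1]; have [_ [+ _]] := FXi X 1 FX X1; apply.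
  split.
    move=> x y [X FX Xx] [Y FY Yy].
    case: (Ftot X Y FX FY) => XY.
      exists Y => //; have [_ [_ [+ _]]] := FXi Y y FY Yy; apply => //; exact: XY.
    exists X => //; have [_ [_ [+ _]]] := FXi X x FX Xx; apply => //; exact: XY.
  move=> r x [X FX Xx]; exists X => //.
  by have [_ [_ [_ +]]] := FXi X x FX Xx; apply.
move=> A [PA Amax].
have An : A <> set0.
  move=> A0; apply: (Amax I); first by rewrite A0; split => // /(_ x0 Ix0).
  by right; split => //.
case: PA => // -[IA [A1 [Aadd Amul]]].
exists A; split => //; split.
  split; first by exists x0; exact: IA.
  by split => //; exists 1.
move=> J hJ AJ.
have J1 := one_notin hJ.
case: hJ => [_ [_ [Jadd Jmul]]].
case: (pselect (J `<=` A)) => [JA|nJA]; first by apply/seteqP; split.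
exfalso; apply: (Amax J); first by split.
right; split => //; exact: subset_trans AJ.
Qed.

Lemma max_prime (M : set R) a b : is_maximal_ideal M -> ~ M a -> ~ M b -> ~ M (a * b).
Proof.
move=> [hM Mmax] Ma Mb Mab.
have M0 := ideal0 hM; have M1 := one_notin hM.
have [_ [_ [Madd Mmul]]] := hM.
have gen : forall a, ~ M a -> exists m r, M m /\ 1 = m + r * a.
  move=> z Mz.
  pose J := [set y | exists m r, M m /\ y = m + r * z].
  case: (pselect (J 1)) => [[m [r [Mm e]]]|nJ1]; first by exists m, r.
  exfalso.
  have hJ : is_ideal J.
    split; first by exists z, 0, 1; rewrite mul1r add0r.
    split; first by exists 1.
    split.
      move=> x y [m1 [r1 [Mm1 ->]]] [m2 [r2 [Mm2 ->]]].
      exists (m1 + m2), (r1 + r2); split; first exact: Madd.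
      by rewrite mulrDl addrACA.
    move=> r x [m1 [r1 [Mm1 ->]]]; exists (r * m1), (r * r1); split; first exact: Mmul.
    by rewrite mulrDr mulrA.
  have MJ : M `<=` J by move=> m Mm; exists m, 0; rewrite mul0r addr0.
  have JM := Mmax J hJ MJ.
  apply: Mz; rewrite -JM; exists 0, 1; by rewrite mul1r add0r.
have [m1 [r [Mm1 e1]]] := gen a Ma.
have [m2 [s [Mm2 e2]]] := gen b Mb.
apply: M1; rewrite -(mulr1 1) {1}e1 e2 mulrDl.
apply: (Madd); first by rewrite mulrC; apply: (Mmul).
rewrite mulrDr; apply: (Madd); first by apply: (Mmul).
have -> : r * a * (s * b) = r * s * (a * b) := mulrACA r a s b.
by apply: (Mmul).
Qed.

Lemma prod_notin (M : set R) n (c : 'I_n -> R) : is_maximal_ideal M ->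
  (forall j, ~ M (c j)) -> ~ M (\prod_(j < n) c j).
Proof.
move=> hM hc.
apply: (big_ind (fun x => ~ M x)); first exact: one_notin (proj1 hM).
  by move=> x y; apply: max_prime.
by move=> j _; apply: hc.
Qed.

Lemma prod_in (x : set R) n (c : 'I_n -> R) j0 : is_ideal x ->
  x (c j0) -> x (\prod_(j < n) c j).
Proof.
move=> [_ [_ [_ xmul]]] xc.
by rewrite (bigD1 j0) //= mulrC; apply: xmul.
Qed.

Lemma sum_in (N : set R) (c : set R -> R) (s : seq (R * set R)) : is_ideal N ->
  (forall p, List.In p s -> N (c p.2)) -> N (\sum_(p <- s) p.1 * c p.2).
Proof.
move=> hN; have N0 := ideal0 hN; have [_ [_ [Nadd Nmul]]] := hN.
elim: s => [|p s IH] hs; first by rewrite big_nil.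
rewrite big_cons; apply: (Nadd); first by apply: (Nmul); apply: hs; left.
by apply: IH => q hq; apply: hs; right.
Qed.

Lemma In_cat {T} {p : T} {s1 s2 : seq T} : List.In p (s1 ++ s2) -> List.In p s1 \/ List.In p s2.
Proof.
elim: s1 => [|a s1 IH] /=; first by right.
move=> [->|/IH [] ?]; [by left; left| by left; right| by right].
Qed.

Lemma In_map {T U} {f : T -> U} {p} {s : seq T} : List.In p (map f s) -> exists q, f q = p /\ List.In q s.
Proof.
elim: s => [|a s IH] //= [<-|/IH [q [e h]]]; first by exists a; split => //; left.
by exists q; split => //; right.
Qed.

End Helpers.
Arguments krull {R I} _.
Arguments one_notin {R I} _ _.
Arguments ideal0 {R I} _.
Arguments prod_notin {R M n c} _ _ _.
Arguments sum_in {R N c s} _ _.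

Theorem theorem3p3 (R : comPzSemiRingType) (sigma : set (set R))
  (hideal : forall x, sigma x -> is_ideal x)
  (hmax : forall M, is_maximal_ideal M -> sigma M) :
  iseki_quasi_compact sigma.
Proof.
move=> I U Uo cov.
have key : forall M, is_maximal_ideal M -> exists i c, ~ M c /\
    forall x, sigma x -> ~ x c -> U i x.
  move=> M hM; have sM := hmax M hM.
  case: (cov M sM) => i _ UiM; case: (Uo i) => F [FB Ueq].
  rewrite Ueq in UiM; case: UiM => B FBB BM; case: (FB B FBB) => n [a [aI Beq]].
  have hc : forall j, exists c, a j c /\ ~ M c.
    move=> j; rewrite Beq in BM; case: BM => _ h.
    apply: contrapT => nc; apply: (h j); split => // y ay.
    apply: contrapT => My; apply: nc; by exists y.
  have [cj hcj] := choice hc.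
  exists i, (\prod_(j < n) cj j)%R; split.
    by apply: prod_notin hM _ => j; exact: (hcj j).2.
  move=> x sx xc; rewrite Ueq; exists B => //; rewrite Beq; split => // j [_ ax].
  apply: xc; apply: (@prod_in _ x _ _ j (hideal x sx)); apply: ax; exact: (hcj j).1.
have hex : forall M : set R, exists c : R, is_maximal_ideal M -> ~ M c /\
    exists i, forall x, sigma x -> ~ x c -> U i x.
  move=> M.
  case: (pselect (is_maximal_ideal M)) => hM; last by exists 0%R.
  have [i [c' [h1 h2]]] := key M hM; exists c' => _; split => //; by exists i.
have [c hc] := choice hex.
pose J := [set y : R | exists s : seq (R * set R),
  (forall p, List.In p s -> is_maximal_ideal p.2) /\ y = (\sum_(p <- s) p.1 * c p.2)%R].
have J1 : J 1%R.
  apply: contrapT => nJ1.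
  have hJ : is_ideal J.
    split; first by exists 0%R, [::]; rewrite big_nil.
    split; first by exists 1%R.
    split.
      move=> x y [s1 [h1 ->]] [s2 [h2 ->]]; exists (s1 ++ s2); split; last by rewrite big_cat.
      by move=> p hp; case: (In_cat hp) => ?; [exact: h1|exact: h2].
    move=> r x [s [h ->]]; exists [seq (r * p.1, p.2)%R | p <- s]; split.
      by move=> p hp; case: (In_map hp) => q [<- qs]; exact: (h q qs).
    by rewrite big_map GRing.mulr_sumr; apply: eq_bigr => p _; rewrite GRing.mulrA.
  have [N [hN JN]] := krull hJ.
  have [hcN _] := hc N hN; apply: hcN; apply: JN; exists [:: (1%R, N)]; split.
    by move=> p [<-|[]].
  by rewrite big_cons big_nil GRing.mul1r GRing.addr0.
case: J1 => s [hs e1].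
have fin : forall t : seq (R * set R), (forall p, List.In p t -> is_maximal_ideal p.2) ->
    exists n (f : 'I_n -> I), forall p, List.In p t -> forall x, sigma x ->
      ~ x (c p.2) -> exists k, U (f k) x.
  elim => [|p t IH] ht.
    have f0 : 'I_0 -> I by move=> [m hm]; exfalso; rewrite ltn0 in hm.
    by exists 0, f0.
  have [n [f hf]] := IH (fun q hq => ht q (or_intror hq)).
  have [_ [i hi]] := hc p.2 (ht p (or_introl erefl)).
  exists n.+1, (fun k => oapp f i (unlift ord0 k)).
  move=> q [<-|hq] x sx xc.
    by exists ord0; rewrite unlift_none /=; exact: hi.
  have [k hk] := hf q hq x sx xc; exists (lift ord0 k); by rewrite liftK.
have [n [f hf]] := fin s hs.
exists n, f => x sx.
have [N [hN xN]] := krull (hideal x sx).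
have [p [ps pN]] : exists p, List.In p s /\ ~ N (c p.2).
  apply: contrapT => h; apply: (one_notin (proj1 hN)); rewrite e1.
  apply: sum_in (proj1 hN) _ => p ps; apply: contrapT => pN; apply: h; by exists p.
have [k hk] := hf p ps x sx (fun xc => pN (xN _ xc)).
by exists k.
Qed.
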